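(* Let $N\ge1$ be an integer, $0<\lambda<1$ and $\lambda^N\le\delta\le1$, and put $k_+=\lceil\log_\lambda\delta\rceil$, $k_-=\lfloor\log_\lambda\delta\rfloor$. Then $$\frac{(N-k_+)\lambda}{k_++(N-k_+)\lambda}\le F(N,\delta,\lambda)\le\frac{(N-k_-)\lambda}{k_-+(N-k_-)\lambda}.$$
   Context: Let $\mathcal H$ be a Hilbert space of finite dimension $D\ge 2$ and $|\Psi\rangle\in\mathcal H$ a unit vector. For $0\le\lambda<1$ let $\Omega_\lambda=|\Psi\rangle\langle\Psi|+\lambda(1-|\Psi\rangle\langle\Psi|)$. For a density operator $\rho$ on $\mathcal H^{\otimes(N+1)}$ put $p_\rho=\mathrm{tr}[(\Omega_\lambda^{\otimes N}\otimes 1)\rho]$ and $f_\rho=\mathrm{tr}[(\Omega_\lambda^{\otimes N}\otimes|\Psi\rangle\langle\Psi|)\rho]$, and $F(N,\delta,\lambda)=\min\{f_\rho/p_\rho:p_\rho\ge\delta\}$, the minimum over permutation-invariant density operators on $\mathcal H^{\otimes(N+1)}$. *)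

(* Defs.v *)
From HB Require Import structures.
From mathcomp Require Import all_boot all_order all_algebra all_fingroup.
From mathcomp Require Import reals exp.
From mathcomp Require Import complex mxtens.
Set Implicit Arguments. Unset Strict Implicit. Unset Printing Implicit Defensive.
Import Order.TTheory GRing.Theory Num.Theory.
Local Open Scope ring_scope.
Local Open Scope complex_scope.

Section QDefs.
Variable R : realType.
Local Notation C := R[i].

Definition adj {m n} (A : 'M[C]_(m, n)) : 'M[C]_(n, m) := map_mx conjc A^T.

(* positive semidefinite: <v, A v> >= 0 in C (i.e. is a nonnegative real) *)
Definition psd {n} (A : 'M[C]_n) : Prop :=
  forall v : 'cV[C]_n, 0 <= (adj v *m A *m v) 0 0.

Definition density {n} (rho : 'M[C]_n) : Prop :=
  adj rho = rho /\ psd rho /\ \tr rho = 1.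

Variables (D N : nat).
(* H^{(N+1)} is C^(D^N * D), with the standard basis e_{d_0} (x) ... (x) e_{d_N}
   (ordered as in mxtens: first factor most significant), index
   sum_j d_j * D^(N - j). *)
Definition digit (j : 'I_N.+1) (x : nat) : nat := (x %/ D ^ (N - j)) %% D.

(* Permutation operator P_sigma: e_{(d_l)_l} |-> e_{(d_(sigma l))_l} *)
Definition perm_op (s : {perm 'I_N.+1}) : 'M[C]_(D ^ N * D) :=
  \matrix_(x, y) ((nat_of_ord x ==
      \sum_(l < N.+1) digit (s l) y * D ^ (N - l))%N)%:R.

Definition perm_invariant (rho : 'M[C]_(D ^ N * D)) : Prop :=
  forall s : {perm 'I_N.+1}, perm_op s *m rho = rho *m perm_op s.

Variable Psi : 'cV[C]_D.
Definition projPsi : 'M[C]_D := Psi *m adj Psi.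
Definition Omega (lam : R) : 'M[C]_D := projPsi + lam%:C *: (1 - projPsi).

Definition p_of (lam : R) (rho : 'M[C]_(D ^ N * D)) : C :=
  \tr ((ntensmx (Omega lam) N *t (1 : 'M[C]_D)) *m rho).
Definition f_of (lam : R) (rho : 'M[C]_(D ^ N * D)) : C :=
  \tr ((ntensmx (Omega lam) N *t projPsi) *m rho).

Definition feasible (delta lam : R) (rho : 'M[C]_(D ^ N * D)) : Prop :=
  density rho /\ perm_invariant rho /\ delta%:C <= p_of lam rho.

Definition is_F (delta lam : R) (x : C) : Prop :=
  (exists rho, feasible delta lam rho /\ f_of lam rho / p_of lam rho = x) /\
  (forall rho, feasible delta lam rho -> x <= f_of lam rho / p_of lam rho).
End QDefs.

(* Main.v *)
Require Import Defs.
From HB Require Import structures.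
From mathcomp Require Import all_boot all_order all_algebra all_fingroup.
From mathcomp Require Import reals exp.
From mathcomp Require Import complex mxtens.
From mathcomp Require Import ring lra.
Import Order.TTheory GRing.Theory Num.Theory.

Section Digits.
Variable D : nat.
Hypothesis D_gt0 : (0 < D)%N.

Definition genc (n : nat) (t : nat -> nat) := \sum_(l < n.+1) t l * D ^ (n - l).

Lemma gencS n t : genc n.+1 t = genc n t * D + t n.+1.
Proof.
rewrite /genc big_ord_recr /= subnn expn0 muln1; congr (_ + _).
rewrite big_distrl /=; apply: eq_bigr => l _ /=.
by rewrite -mulnA -expnSr subSn // -ltnS.
Qed.

Lemma genc_lt n t : (forall l, l <= n -> t l < D) -> genc n t < D ^ n.+1.
Proof.
elim: n t => [|n IH] t Ht.
  by rewrite /genc big_ord1 subnn expn0 muln1 expn1 Ht.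
rewrite gencS expnSr.
have h1 : genc n t < D ^ n.+1 by apply: IH => l hl; apply: Ht; rewrite (leq_trans hl).
have h2 : t n.+1 < D by apply: Ht.
apply: (@leq_trans ((genc n t).+1 * D)).
  by rewrite mulSn addnC ltn_add2r.
by rewrite leq_mul2r h1 orbT.
Qed.

Lemma genc_dig n x : x < D ^ n.+1 -> genc n (fun l => (x %/ D ^ (n - l)) %% D) = x.
Proof.
elim: n x => [|n IH] x Hx.
  by rewrite /genc big_ord1 subnn expn0 muln1 divn1 modn_small // -(expn1 D).
rewrite gencS subnn expn0 divn1.
have -> : genc n (fun l => x %/ D ^ (n.+1 - l) %% D) = genc n (fun l => (x %/ D) %/ D ^ (n - l) %% D).
  apply: eq_bigr => l _; congr (_ * _).
  by rewrite -divnMA -expnS subSn // -ltnS.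
rewrite IH; first by rewrite -divn_eq.
by rewrite ltn_divLR // -expnSr.
Qed.

Lemma dig_genc n t j : (forall l, l <= n -> t l < D) -> j <= n ->
  (genc n t %/ D ^ (n - j)) %% D = t j.
Proof.
elim: n t j => [|n IH] t j Ht Hj.
  move: Hj; rewrite leqn0 => /eqP ->.
  by rewrite /genc big_ord1 subnn expn0 muln1 divn1 modn_small // Ht.
rewrite gencS.
have [hj|hj] := ltnP j n.+1; last first.
  have -> : j = n.+1 by apply/eqP; rewrite eqn_leq Hj hj.
  by rewrite subnn expn0 divn1 modnMDl modn_small // Ht.
rewrite subSn // expnS divnMA divnMDl // (divn_small (Ht _ (leqnn _))) addn0.
by apply: IH => // l hl; apply: Ht; rewrite (leq_trans hl).
Qed.

End Digits.

Local Open Scope ring_scope.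
Set Implicit Arguments. Unset Strict Implicit.

Section Tens.
Variable T : comPzRingType.
Variable D : nat.
Hypothesis D_gt0 : (0 < D)%N.

Fixpoint TTrec k (A : nat -> 'M[T]_D) : 'M[T]_(D ^ k.+1) :=
  if k is k'.+1 return 'M[T]_(D ^ k.+1) then A 0%N *t TTrec k' (fun i => A i.+1) else A 0%N.

Definition od (n : nat) : 'I_D := Ordinal (ltn_pmod n D_gt0).

Lemma digit_mod k i x : (i <= k)%N ->
  (((x %% D ^ k.+1) %/ D ^ (k - i)) %% D = (x %/ D ^ (k - i)) %% D)%N.
Proof.
move=> hik.
have e : (D ^ k.+1 = D ^ i.+1 * D ^ (k - i))%N by rewrite -expnD addSn subnKC.
by rewrite e -modn_divl modn_dvdm // dvdn_exp.
Qed.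

Lemma TTrecE k A (x y : 'I_(D ^ k.+1)) :
  TTrec k A x y = \prod_(i < k.+1) A i (od (x %/ D ^ (k - i))%N) (od (y %/ D ^ (k - i))%N).
Proof.
elim: k A x y => [|k IH] A x y.
  rewrite big_ord1 /= subnn expn0 !divn1; congr (A 0%N _ _); apply: val_inj => /=;
  by rewrite modn_small // -(expn1 D).
rewrite /= mxE big_ord_recl /= subn0; congr (_ * _).
  have hx : (x < D ^ k.+2)%N := ltn_ord x.
  have hy : (y < D ^ k.+2)%N := ltn_ord y.
  congr (A 0%N _ _); apply: val_inj => /=; rewrite modn_small // ltn_divLR ?expn_gt0 ?D_gt0 //;
  by rewrite -expnSr.
rewrite IH; apply: eq_bigr => i _ /=; rewrite subSS.
congr (A _ _ _); apply: val_inj => /=; by rewrite digit_mod // -ltnS.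
Qed.

Lemma TTrec_ext k A B : (forall i, (i <= k)%N -> A i = B i) -> TTrec k A = TTrec k B.
Proof.
elim: k A B => [|k IH] A B h /=; first by rewrite h.
by rewrite h // (IH (fun i => A i.+1) (fun i => B i.+1)) // => i hi; rewrite h.
Qed.

Lemma TTrec_mul k A B : TTrec k A *m TTrec k B = TTrec k (fun i => A i *m B i).
Proof.
elim: k A B => [|k IH] A B //=.
by rewrite tensmx_mul IH.
Qed.

Lemma mxtrace_tens m n (A : 'M[T]_m) (B : 'M[T]_n) : \tr (A *t B) = \tr A * \tr B.
Proof. by rewrite /mxtrace mulr_sum; apply: eq_bigr => i _; rewrite mxE. Qed.

Lemma TTrec_tr k A : \tr (TTrec k A) = \prod_(i < k.+1) \tr (A i).
Proof.
elim: k A => [|k IH] A /=; first by rewrite big_ord1.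
rewrite big_ord_recl -(IH (fun i => A i.+1)); exact: mxtrace_tens.
Qed.

Lemma tens11 m n : (1%:M : 'M[T]_m) *t (1%:M : 'M[T]_n) = 1%:M.
Proof.
apply/matrixP=> i j.
case: (mxtens_indexP i) => i1 i2; case: (mxtens_indexP j) => j1 j2.
rewrite tensmxE !mxE -natrM; congr (_%:R).
symmetry; by rewrite -val_eqE /= eq_addl_mul ?ltn_ord // xpair_eqE mulnb.
Qed.

Lemma TTrec1 k : TTrec k (fun _ => 1%:M) = 1%:M.
Proof. by elim: k => [|k IH] //=; rewrite IH tens11. Qed.

End Tens.

Local Open Scope complex_scope.

Section Adj.
Variable R : realType.
Local Notation C := R[i].

Lemma cadj_mul m n p (A : 'M[C]_(m, n)) (B : 'M[C]_(n, p)) : adj (A *m B) = adj B *m adj A.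
Proof. by rewrite /adj trmx_mul map_mxM. Qed.

Lemma cadjK m n (A : 'M[C]_(m, n)) : adj (adj A) = A.
Proof. by apply/matrixP => i j; rewrite !mxE conjcK. Qed.

Lemma cadjD m n (A B : 'M[C]_(m, n)) : adj (A + B) = adj A + adj B.
Proof. by apply/matrixP => i j; rewrite !mxE rmorphD. Qed.

Lemma cadjZ m n c (A : 'M[C]_(m, n)) : adj (c *: A) = c^* *: adj A.
Proof. by apply/matrixP => i j; rewrite !mxE rmorphM. Qed.

Lemma cadj1 m : adj (1%:M : 'M[C]_m) = 1%:M.
Proof. by apply/matrixP => i j; rewrite !mxE conjc_nat eq_sym. Qed.

Lemma cadjB m n (A B : 'M[C]_(m, n)) : adj (A - B) = adj A - adj B.
Proof. by apply/matrixP => i j; rewrite !mxE rmorphB. Qed.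

Lemma cadj_sum m n I (r : seq I) (F : I -> 'M[C]_(m, n)) :
  adj (\sum_(i <- r) F i) = \sum_(i <- r) adj (F i).
Proof.
apply/matrixP => i j; rewrite !mxE !summxE.
rewrite (big_morph _ (@rmorphD _ _ conjc) (rmorph0 _)).
by apply: eq_bigr => k _; rewrite !mxE.
Qed.

Lemma cadj_tens m n p q (A : 'M[C]_(m, n)) (B : 'M[C]_(p, q)) : adj (A *t B) = adj A *t adj B.
Proof. by rewrite /adj trmx_tens map_mxT. Qed.

Lemma cadj_TT D k (A : nat -> 'M[C]_D) : adj (TTrec k A) = TTrec k (fun i => adj (A i)).
Proof.
elim: k A => [|k IH] A //=.
rewrite -IH; exact: cadj_tens.
Qed.

Lemma quad_col m k (B : 'M[C]_(k, m)) (M : 'M[C]_k) (x : 'I_m) :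
  (adj B *m M *m B) x x = (adj (col x B) *m M *m col x B) 0 0.
Proof.
rewrite !mxE; apply: eq_bigr => b _; rewrite !mxE; congr (_ * _).
by apply: eq_bigr => a _; rewrite !mxE.
Qed.

Lemma psd_quad_tr m k (B : 'M[C]_(k, m)) (M : 'M[C]_k) :
  psd M -> 0 <= \tr (adj B *m M *m B).
Proof.
move=> hM; rewrite /mxtrace; apply: sumr_ge0 => x _.
by rewrite quad_col; apply: hM.
Qed.

Lemma adj_self_ge0 m (u : 'cV[C]_m) : 0 <= (adj u *m u) 0 0.
Proof.
rewrite !mxE; apply: sumr_ge0 => a _; rewrite !mxE mulrC; exact: mulcJ_ge0.
Qed.

End Adj.

Section Main.
Variable R : realType.
Local Notation C := R[i].
Variable D : nat.
Hypothesis D_gt0 : (0 < D)%N.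
Variable n : nat.
Local Notation N := n.+1.
Variable Psi : 'cV[C]_D.
Hypothesis hPsi : adj Psi *m Psi = 1.

Local Notation od := (od D_gt0).
Implicit Types (s : {perm 'I_N.+1}) (f g : {ffun 'I_N.+1 -> bool}) (rho : 'M[C]_(D ^ N * D)).

Definition Xo (A : 'I_N.+1 -> 'M[C]_D) : 'M[C]_(D ^ N * D) :=
  TTrec n (fun i => A (inord i)) *t A ord_max.

Lemma XoE A (x y : 'I_(D ^ N * D)) :
  Xo A x y = \prod_(i < N.+1) A i (od (x %/ D ^ (N - i))%N) (od (y %/ D ^ (N - i))%N).
Proof.
rewrite /Xo mxE TTrecE [in RHS]big_ord_recr /=; congr (_ * _).
  apply: eq_bigr => i _.
  have hi : (i <= n)%N by rewrite -ltnS.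
  have -> : inord i = widen_ord (leqnSn N) i by apply: val_inj; rewrite /= inordK // ltnS ltnW.
  congr (A _ _ _); apply: val_inj => /=; by rewrite subSn // -divnMA -expnS.
by rewrite subnn expn0 !divn1; congr (A _ _ _); apply: val_inj.
Qed.

Lemma Xo_ext A B : (forall i, A i = B i) -> Xo A = Xo B.
Proof. by move=> h; apply/matrixP => x y; rewrite !XoE; apply: eq_bigr => i _; rewrite h. Qed.

Lemma Xo_mul A B : Xo A *m Xo B = Xo (fun i => A i *m B i).
Proof. by rewrite /Xo tensmx_mul TTrec_mul. Qed.

Lemma adj_Xo A : adj (Xo A) = Xo (fun i => adj (A i)).
Proof. by rewrite /Xo cadj_tens cadj_TT. Qed.

Lemma Xo_tr A : \tr (Xo A) = \prod_(i < N.+1) \tr (A i).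
Proof.
rewrite /Xo mxtrace_tens TTrec_tr [in RHS]big_ord_recr /=; congr (_ * _).
apply: eq_bigr => i _; congr (\tr (A _)); apply: val_inj; rewrite /= inordK //.
by rewrite ltnS ltnW.
Qed.

Lemma Xo1 : Xo (fun _ => 1%:M) = 1%:M.
Proof. by rewrite /Xo TTrec1 tens11. Qed.

Lemma Xo_zero A i : A i = 0 -> Xo A = 0.
Proof.
move=> hA; apply/matrixP => x y; rewrite XoE mxE (bigD1 i) //= hA mxE mul0r //.
Qed.

Lemma ntens_TT k (A : 'M[C]_D) : ntensmx_rec A k = TTrec k (fun _ => A).
Proof. by elim: k => [|k IH] //=; rewrite IH. Qed.

Local Notation P := (projPsi Psi).
Definition Pc := 1%:M - P.

Lemma PP : P *m P = P.
Proof. by rewrite /projPsi mulmxA -(mulmxA Psi) hPsi mulmx1. Qed.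
Lemma adjP : adj P = P.
Proof. by rewrite /projPsi cadj_mul cadjK. Qed.
Lemma trP : \tr P = 1.
Proof. by rewrite /projPsi mxtrace_mulC hPsi mxtrace1. Qed.
Lemma PPc : P *m Pc = 0.
Proof. by rewrite /Pc mulmxBr mulmx1 PP subrr. Qed.
Lemma PcP : Pc *m P = 0.
Proof. by rewrite /Pc mulmxBl mul1mx PP subrr. Qed.
Lemma PcPc : Pc *m Pc = Pc.
Proof. by rewrite {1}/Pc mulmxBl mul1mx PPc subr0. Qed.
Lemma adjPc : adj Pc = Pc.
Proof. by rewrite /Pc cadjB cadj1 adjP. Qed.
Lemma trPc : \tr Pc = D%:R - 1.
Proof. by rewrite /Pc raddfB /= mxtrace1 trP. Qed.
Lemma PaddPc : P + Pc = 1%:M.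
Proof. by rewrite /Pc addrC subrK. Qed.

Definition Mb (b : bool) := if b then Pc else P.
Definition Qf (f : {ffun 'I_N.+1 -> bool}) := Xo (fun i => Mb (f i)).

Lemma Mb_mul b : Mb b *m Mb b = Mb b.
Proof. by case: b; rewrite /= ?PcPc ?PP. Qed.
Lemma Mb_orth b c : b != c -> Mb b *m Mb c = 0.
Proof. by case: b; case: c => //= _; rewrite ?PcP ?PPc. Qed.
Lemma adjMb b : adj (Mb b) = Mb b.
Proof. by case: b; rewrite /= ?adjPc ?adjP. Qed.

Lemma Qf_mul f g : Qf f *m Qf g = if f == g then Qf f else 0.
Proof.
rewrite /Qf Xo_mul; case: eqP => [<-|hfg].
  by apply: Xo_ext => i; rewrite Mb_mul.
case: (pickP (fun i => f i != g i)) => [i hi|h].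
  by apply: (Xo_zero (i := i)); rewrite Mb_orth.
by case: hfg; apply/ffunP => i; move: (h i) => /negbFE /eqP.
Qed.

Lemma adjQf f : adj (Qf f) = Qf f.
Proof. by rewrite /Qf adj_Xo; apply: Xo_ext => i; rewrite adjMb. Qed.

Lemma Xo_expand (c : 'I_N.+1 -> bool -> C) :
  Xo (fun i => c i false *: P + c i true *: Pc) =
  \sum_(f : {ffun 'I_N.+1 -> bool}) (\prod_i c i (f i)) *: Qf f.
Proof.
have e : forall i a b, (c i false *: P + c i true *: Pc) a b = \sum_(bb : bool) c i bb * Mb bb a b.
  by move=> i a b; rewrite big_bool /= !mxE addrC.
apply/matrixP => x y; rewrite XoE summxE.
under eq_bigr => i _ do rewrite e.
rewrite bigA_distr_bigA /=; apply: eq_bigr => f _.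
by rewrite mxE XoE -big_split.
Qed.


Lemma phi_proof (s : {perm 'I_N.+1}) (y : 'I_(D ^ N * D)) :
  (genc D N (fun l => digit D (s (inord l)) y) < D ^ N * D)%N.
Proof. have h := @genc_lt D N (fun l => digit D (s (inord l)) y) (fun l _ => ltn_pmod _ D_gt0). by apply: (leq_trans h); rewrite expnSr. Qed.

Definition phi s y : 'I_(D ^ N * D) := Ordinal (phi_proof s y).

Lemma perm_opE s x y : perm_op R D s x y = (x == phi s y)%:R.
Proof.
rewrite mxE; congr (_%:R).
have -> : (\sum_(l < N.+1) digit D (s l) y * D ^ (N - l))%N = val (phi s y).
  by rewrite /= /genc; apply: eq_bigr => l _; rewrite inord_val.
by [].
Qed.

Lemma dig_phi s y (i : 'I_N.+1) :
  ((phi s y) %/ D ^ (N - i) %% D = y %/ D ^ (N - s i) %% D)%N.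
Proof.
rewrite /= (dig_genc _ D_gt0); first by rewrite inord_val.
  by move=> l _; exact: ltn_pmod.
by rewrite -ltnS.
Qed.

Lemma phiK s x : phi s (phi ((s^-1)%g)%g x) = x.
Proof.
apply: val_inj => /=.
transitivity (genc D N (fun l => (x %/ D ^ (N - l)) %% D)%N); last first.
  by apply: (genc_dig _ D_gt0); apply: (leq_trans (ltn_ord x)); rewrite -expnSr.
rewrite /genc; apply: eq_bigr => l _; congr (_ * _)%N.
by rewrite /digit dig_phi permK inord_val.
Qed.

Lemma phi_inj s : injective (phi s).
Proof. apply: (can_inj (g := phi (s^-1)%g)) => x; have := phiK ((s^-1)%g)%g x; by rewrite invgK. Qed.

Lemma sum_pick m (a : 'I_m) (F : 'I_m -> C) : \sum_y (y == a)%:R * F y = F a.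
Proof.
rewrite (bigD1 a) //= eqxx mul1r big1 ?addr0 // => y /negbTE ->; by rewrite mul0r.
Qed.

Lemma PtMP s (M : 'M[C]_(D ^ N * D)) x z :
  ((perm_op R D s)^T *m M *m perm_op R D s) x z = M (phi s x) (phi s z).
Proof.
rewrite mxE; under eq_bigr => w _ do rewrite perm_opE mulrC.
rewrite sum_pick mxE; under eq_bigr => y _ do rewrite mxE perm_opE.
by rewrite sum_pick.
Qed.

Lemma PtXP s A : (perm_op R D s)^T *m Xo A *m perm_op R D s = Xo (fun i => A (((s^-1)%g)%g i)).
Proof.
apply/matrixP => x z; rewrite PtMP !XoE [RHS](reindex_inj (@perm_inj _ s)) /=.
apply: eq_bigr => i _; rewrite permK; congr (A i _ _); apply: val_inj => /=;
by rewrite dig_phi.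
Qed.

Lemma PPt s : perm_op R D s *m (perm_op R D s)^T = 1%:M.
Proof.
apply/matrixP => x z; rewrite mxE; under eq_bigr => y _ do rewrite [(_^T) _ _]mxE !perm_opE.
rewrite (bigD1 (phi ((s^-1)%g)%g x)) //= phiK eqxx mul1r big1 ?addr0.
  by rewrite mxE eq_sym.
move=> y hy; case: eqP => [hx|]; last by rewrite mul0r.
have e := phiK ((s^-1)%g) y; rewrite invgK in e. by move: hy; rewrite hx e eqxx.
Qed.

Lemma Xo_P s A : Xo A *m perm_op R D s = perm_op R D s *m Xo (fun i => A (((s^-1)%g)%g i)).
Proof. by rewrite -PtXP !mulmxA PPt mul1mx. Qed.

Definition w (rho : 'M[C]_(D ^ N * D)) f := \tr (Qf f *m rho).

Lemma w_perm rho s f : perm_invariant rho -> w rho [ffun i => f (((s^-1)%g)%g i)] = w rho f.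
Proof.
move=> hrho; rewrite /w.
have -> : Qf [ffun i => f (((s^-1)%g)%g i)] = (perm_op R D s)^T *m Qf f *m perm_op R D s.
  by rewrite /Qf PtXP; apply: Xo_ext => i; rewrite ffunE.
rewrite -!mulmxA mxtrace_mulC -!mulmxA [perm_op R D s *m (rho *m _)]mulmxA hrho -mulmxA PPt mulmx1.
by [].
Qed.

Definition cnt (f : {ffun 'I_N.+1 -> bool}) := (\sum_(i < N.+1) (f i : nat))%N.

Lemma cnt_perm (s : {perm 'I_N.+1}) f : cnt [ffun i => f (s i)] = cnt f.
Proof.
rewrite /cnt [RHS](reindex_inj (@perm_inj _ s)) /=.
by apply: eq_bigr => i _; rewrite ffunE.
Qed.

Lemma sym_max (ww : {ffun 'I_N.+1 -> bool} -> C) (G : nat -> C) :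
  (forall (s : {perm 'I_N.+1}) f, ww [ffun i => f (s i)] = ww f) ->
  N.+1%:R * \sum_(f : {ffun 'I_N.+1 -> bool}) (f ord_max)%:R * G (cnt f) * ww f =
  \sum_(f : {ffun 'I_N.+1 -> bool}) (cnt f)%:R * G (cnt f) * ww f.
Proof.
move=> hw.
have hi : forall i : 'I_N.+1, \sum_(f : {ffun 'I_N.+1 -> bool}) (f i)%:R * G (cnt f) * ww f =
                            \sum_(f : {ffun 'I_N.+1 -> bool}) (f ord_max)%:R * G (cnt f) * ww f.
  move=> i; pose t := tperm i ord_max.
  have hinj : injective (fun f : {ffun 'I_N.+1 -> bool} => [ffun j => f (t j)]).
    move=> f g /ffunP h; apply/ffunP => j; have := h (t j).
    by rewrite !ffunE tpermK.
  rewrite (reindex_inj hinj) /=; apply: eq_bigr => f _.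
  by rewrite ffunE tpermL cnt_perm hw.
transitivity (\sum_(i < N.+1) \sum_(f : {ffun 'I_N.+1 -> bool}) (f i)%:R * G (cnt f) * ww f).
  by rewrite -[in RHS](eq_bigr _ (fun i _ => esym (hi i))) sumr_const card_ord mulr_natl.
rewrite exchange_big /=; apply: eq_bigr => f _.
by rewrite /cnt natr_sum !mulr_suml.
Qed.

Definition HA (T : pzRingType) (M : nat) (x : T) (j : nat) :=
  (M%:R - j%:R) * x ^+ j.+1 + j%:R * x ^+ j.
Definition HB (T : pzRingType) (M : nat) (x : T) (j : nat) :=
  (M%:R - j%:R) * x ^+ j.+1.

Lemma tr_expand (a : {ffun 'I_N.+1 -> bool} -> C) rho :
  \tr ((\sum_(f : {ffun 'I_N.+1 -> bool}) a f *: Qf f) *m rho) =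
  \sum_(f : {ffun 'I_N.+1 -> bool}) a f * w rho f.
Proof.
rewrite mulmx_suml raddf_sum; apply: eq_bigr => f _.
by rewrite -scalemxAl; apply: mxtraceZ.
Qed.

Lemma sumQf : \sum_(f : {ffun 'I_N.+1 -> bool}) Qf f = 1%:M.
Proof.
have := Xo_expand (fun _ _ => 1).
rewrite (@Xo_ext _ (fun _ => 1%:M)) ?Xo1; last by move=> i; rewrite !scale1r PaddPc.
move=> ->; apply: eq_bigr => f _; by rewrite prodr_const expr1n scale1r.
Qed.

Lemma sum_w rho : \sum_(f : {ffun 'I_N.+1 -> bool}) w rho f = \tr rho.
Proof.
have := tr_expand (fun _ => 1) rho.
under eq_bigr => f _ do rewrite scale1r.
by rewrite sumQf mul1mx => ->; apply: eq_bigr => f _; rewrite mul1r.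
Qed.

Lemma w_ge0 rho f : psd rho -> 0 <= w rho f.
Proof.
move=> hrho; rewrite /w.
have -> : Qf f *m rho = Qf f *m Qf f *m rho by rewrite Qf_mul eqxx.
rewrite -mulmxA mxtrace_mulC -{1}adjQf.
exact: psd_quad_tr.
Qed.

Lemma combine lam rho (k : {ffun 'I_N.+1 -> bool} -> C) (G : nat -> C) :
  perm_invariant rho ->
  (forall f, lam * k f = lam ^+ (cnt f).+1 - (f ord_max)%:R * G (cnt f)) ->
  (N.+1%:R * lam) * \sum_(f : {ffun 'I_N.+1 -> bool}) k f * w rho f =
  \sum_(f : {ffun 'I_N.+1 -> bool}) (N.+1%:R * lam ^+ (cnt f).+1 - (cnt f)%:R * G (cnt f)) * w rho f.
Proof.
move=> hrho hk.
have hw : forall s f, w rho [ffun i => f (s i)] = w rho f.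
  by move=> s f; have := w_perm (s^-1)%g f hrho; rewrite invgK.
rewrite -mulrA mulr_sumr.
under eq_bigr => f _ do rewrite mulrA hk mulrBl.
rewrite sumrB mulrBr (sym_max G hw) mulr_sumr -sumrB; apply: eq_bigr => f _.
by rewrite mulrBl !mulrA.
Qed.

Lemma cnt_split f : cnt f = (\sum_(i < N) f (widen_ord (leqnSn N) i) + f ord_max)%N.
Proof. by rewrite /cnt big_ord_recr. Qed.

Lemma pA_formula lam rho : perm_invariant rho ->
  (N.+1%:R * lam%:C) * p_of Psi lam rho =
  \sum_(f : {ffun 'I_N.+1 -> bool}) HA N.+1 (lam%:C) (cnt f) * w rho f.
Proof.
move=> hrho.
pose c (i : 'I_N.+1) (b : bool) := (lam%:C) ^+ (b && (i != ord_max)).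
have eA : ntensmx (Omega Psi lam) N *t (1%:M : 'M[C]_D) = Xo (fun i => c i false *: P + c i true *: Pc).
  have -> : ntensmx (Omega Psi lam) N = TTrec n (fun _ => Omega Psi lam) by rewrite -ntens_TT.
  rewrite /Xo (@TTrec_ext _ _ _ _ (fun i => c (inord i) false *: P + c (inord i) true *: Pc)).
    by rewrite /c eqxx /= expr0 !scale1r PaddPc.
  move=> i hi; rewrite /c /=.
  have -> : (inord i != ord_max :> 'I_N.+1) by rewrite -val_eqE /= inordK ?ltnS ?(leq_trans hi) // neq_ltn ltnS hi.
  by rewrite expr0 expr1 scale1r /Omega /Pc.
rewrite /p_of eA Xo_expand tr_expand.
under eq_bigr => f _ do rewrite /c prodrXr.
rewrite (combine (G := fun j => lam%:C ^+ j.+1 - lam%:C ^+ j) hrho).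
  by apply: eq_bigr => f _; rewrite /HA; congr (_ * _); rewrite mulrBr mulrBl; ring.
move=> f; rewrite -exprS cnt_split big_ord_recr /= eqxx andbF addn0.
have -> : (\sum_(i < N) (f (widen_ord (leqnSn N) i) && (widen_ord (leqnSn N) i != ord_max)) =
           \sum_(i < N) f (widen_ord (leqnSn N) i))%N.
  apply: eq_bigr => i _; have -> : (widen_ord (leqnSn N) i != ord_max) by rewrite -val_eqE /= neq_ltn ltn_ord.
  by rewrite andbT.
case: (f ord_max); rewrite ?addn1 ?addn0 /=; [| by rewrite mul0r subr0].
by rewrite mul1r opprB addrC subrK.
Qed.

Lemma pB_formula lam rho : perm_invariant rho ->
  (N.+1%:R * lam%:C) * f_of Psi lam rho =
  \sum_(f : {ffun 'I_N.+1 -> bool}) HB N.+1 (lam%:C) (cnt f) * w rho f.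
Proof.
move=> hrho.
pose c (i : 'I_N.+1) (b : bool) := if b && (i == ord_max) then 0 else (lam%:C) ^+ b.
have eB : ntensmx (Omega Psi lam) N *t P = Xo (fun i => c i false *: P + c i true *: Pc).
  have -> : ntensmx (Omega Psi lam) N = TTrec n (fun _ => Omega Psi lam) by rewrite -ntens_TT.
  rewrite /Xo (@TTrec_ext _ _ _ _ (fun i => c (inord i) false *: P + c (inord i) true *: Pc)).
    by rewrite /c eqxx /= expr0 scale1r scale0r addr0.
  move=> i hi; rewrite /c /=.
  have -> : (inord i == ord_max :> 'I_N.+1) = false.
    by apply/negbTE; rewrite -val_eqE /= inordK ?ltnS ?(leq_trans hi) // neq_ltn ltnS hi.
  by rewrite expr0 expr1 scale1r /Omega /Pc.
rewrite /f_of eB Xo_expand tr_expand.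
rewrite (combine (G := fun j => lam%:C ^+ j.+1) hrho).
  by apply: eq_bigr => f _; rewrite /HB; congr (_ * _); rewrite mulrBl.
move=> f; rewrite cnt_split big_ord_recr /=.
have -> : \prod_(i < N) c (widen_ord (leqnSn N) i) (f (widen_ord (leqnSn N) i)) =
          \prod_(i < N) lam%:C ^+ f (widen_ord (leqnSn N) i).
  apply: eq_bigr => i _; rewrite /c.
  have -> : (widen_ord (leqnSn N) i == ord_max) = false by apply/negbTE; rewrite -val_eqE /= neq_ltn ltn_ord.
  by rewrite andbF.
rewrite prodrXr /c eqxx.
rewrite andbT.
case: (f ord_max) => /=; first by rewrite !mulr0 mul1r subrr.
by rewrite expr0 !mulr1 addn0 mul0r subr0 -exprS.
Qed.

Lemma ge0_real (z : C) : 0 <= z -> z = (complex.Re z)%:C.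
Proof. move=> h; have hi := ger0_Im h; case: z hi h => a b /= -> _; by []. Qed.

Lemma HA_C M (x : R) j : (HA M x j)%:C = HA M (x%:C) j.
Proof. by rewrite /HA rmorphD !rmorphM rmorphB !rmorph_nat !rmorphXn. Qed.
Lemma HB_C M (x : R) j : (HB M x j)%:C = HB M (x%:C) j.
Proof. by rewrite /HB !rmorphM rmorphB !rmorph_nat !rmorphXn. Qed.

Lemma reduce lam rho : density rho -> perm_invariant rho ->
  exists r : {ffun 'I_N.+1 -> bool} -> R,
    [/\ (forall f, 0 <= r f), \sum_f r f = 1,
        (N.+1%:R * lam%:C) * p_of Psi lam rho = (\sum_f HA N.+1 lam (cnt f) * r f)%:C &
        (N.+1%:R * lam%:C) * f_of Psi lam rho = (\sum_f HB N.+1 lam (cnt f) * r f)%:C].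
Proof.
move=> [hadj [hpsd htr]] hinv.
have hw : forall f, w rho f = (complex.Re (w rho f))%:C by move=> f; apply: ge0_real; apply: w_ge0.
exists (fun f => complex.Re (w rho f)); split.
- by move=> f; rewrite -ler0c -hw w_ge0.
- apply: complexI; rewrite rmorph_sum /= rmorph1 -htr -sum_w; apply: eq_bigr => f _; by rewrite -hw.
- rewrite pA_formula // rmorph_sum; apply: eq_bigr => f _ /=.
  by rewrite rmorphM /= -hw HA_C.
- rewrite pB_formula // rmorph_sum; apply: eq_bigr => f _ /=.
  by rewrite rmorphM /= -hw HB_C.
Qed.

Definition tq f : R := \prod_(i < N.+1) (if f i then D%:R - 1 else 1).

Lemma trQ f : \tr (Qf f) = (tq f)%:C.
Proof.
rewrite /Qf Xo_tr /tq rmorph_prod; apply: eq_bigr => i _.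
by case: (f i); rewrite /= ?trPc ?trP ?rmorphB ?rmorph_nat ?rmorph1.
Qed.

Lemma tq_gt0 f : (1 < D)%N -> 0 < tq f.
Proof.
move=> hD; apply: prodr_gt0 => i _; case: (f i) => //.
by rewrite subr_gt0 ltr1n.
Qed.

Lemma sum_lt m j : (j <= m)%N -> (\sum_(i < m) (i < j : nat))%N = j.
Proof.
elim: m j => [|m IH] j hj; first by move: hj; rewrite leqn0 big_ord0 => /eqP ->.
rewrite big_ord_recr /=.
case: (ltnP m j) => h.
  have -> : j = m.+1 by apply/eqP; rewrite eqn_leq hj h.
  rewrite addn1; congr _.+1.
  rewrite (eq_bigr (fun _ => 1%N)) ?sum1_card ?card_ord // => i _.
  by rewrite /= ltnS ltnW.
by rewrite IH // addn0.
Qed.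

Definition tsum j := \sum_(f | cnt f == j) tq f.

Lemma tsum_gt0 j : (1 < D)%N -> (j <= N.+1)%N -> 0 < tsum j.
Proof.
move=> hD hj.
pose f0 : {ffun 'I_N.+1 -> bool} := [ffun i : 'I_N.+1 => (i < j)%N].
have hf0 : cnt f0 == j.
  rewrite /cnt; apply/eqP; rewrite -[RHS](sum_lt hj); apply: eq_bigr => i _; by rewrite ffunE.
rewrite /tsum (bigD1 f0) //=; apply: (lt_le_trans (tq_gt0 f0 hD)).
rewrite lerDl; apply: sumr_ge0 => g _; exact: ltW (tq_gt0 g hD).
Qed.

Section Construct.
Variables (j0 : nat) (al : R).

Definition coef f : R := (if cnt f == j0 then al / tsum j0 else 0) +
                        (if cnt f == j0.+1 then (1 - al) / tsum j0.+1 else 0).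

Lemma sum_ifcnt (G : {ffun 'I_N.+1 -> bool} -> R) j (a : R) :
  \sum_f (if cnt f == j then a else 0) * G f = a * \sum_(f | cnt f == j) G f.
Proof.
rewrite mulr_sumr [RHS]big_mkcond /=; apply: eq_bigr => f _.
by case: (cnt f == j); rewrite ?mul0r ?mulr0.
Qed.

Lemma sum_coef (G : {ffun 'I_N.+1 -> bool} -> R) :
  \sum_f coef f * G f = al / tsum j0 * \sum_(f | cnt f == j0) G f +
                        (1 - al) / tsum j0.+1 * \sum_(f | cnt f == j0.+1) G f.
Proof.
rewrite -!sum_ifcnt -big_split /=; apply: eq_bigr => f _; by rewrite /coef mulrDl.
Qed.

Definition rho0 := \sum_f (coef f)%:C *: Qf f.

Lemma coef_perm s f : coef [ffun i => f (s i)] = coef f.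
Proof. by rewrite /coef cnt_perm. Qed.

Lemma rho0_adj : adj rho0 = rho0.
Proof.
rewrite /rho0 cadj_sum; apply: eq_bigr => f _.
rewrite cadjZ adjQf; congr (_ *: _); by apply/eqP; rewrite eq_complex /= oppr0 !eqxx.
Qed.

Hypothesis hD : (1 < D)%N.
Hypothesis hj0 : (j0 <= N)%N.
Hypothesis hal : 0 <= al <= 1.

Lemma coef_ge0 f : 0 <= coef f.
Proof.
case/andP: hal => h0 h1.
have t0 := tsum_gt0 hD (leqW hj0).
have t1 : 0 < tsum j0.+1 by apply: tsum_gt0.
rewrite /coef; apply: addr_ge0; case: ifP => _ //; apply: divr_ge0 => //; try exact: ltW.
by rewrite subr_ge0.
Qed.

Lemma rho0_psd : psd rho0.
Proof.
move=> v; rewrite /rho0 mulmx_sumr mulmx_suml summxE; apply: sumr_ge0 => f _.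
rewrite -scalemxAr -scalemxAl mxE; apply: mulr_ge0; first by rewrite ler0c coef_ge0.
have -> : Qf f = adj (Qf f) *m Qf f by rewrite adjQf Qf_mul eqxx.
rewrite !mulmxA -cadj_mul -mulmxA; exact: adj_self_ge0.
Qed.

Lemma sum_coef_tq : \sum_f coef f * tq f = 1.
Proof.
have t0 := tsum_gt0 hD (leqW hj0).
have t1 : 0 < tsum j0.+1 by apply: tsum_gt0.
rewrite sum_coef -/(tsum j0) -/(tsum j0.+1) !mulfVK ?gt_eqF //.
by rewrite addrC subrK.
Qed.

Lemma rho0_tr : \tr rho0 = 1.
Proof.
rewrite /rho0 raddf_sum /=.
transitivity ((\sum_f coef f * tq f)%:C); last by rewrite sum_coef_tq.
rewrite rmorph_sum; apply: eq_bigr => f _.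
by rewrite mxtraceZ trQ rmorphM.
Qed.

Lemma rho0_inv : perm_invariant rho0.
Proof.
move=> s; rewrite /rho0 mulmx_suml mulmx_sumr.
pose h (f : {ffun 'I_N.+1 -> bool}) : {ffun 'I_N.+1 -> bool} := [ffun i => f ((s^-1)%g i)].
have hinj : injective h.
  move=> f g /ffunP e; apply/ffunP => i; have := e (s i); by rewrite !ffunE permK.
transitivity (\sum_f (coef f)%:C *: (perm_op R D s *m Qf (h f))).
  rewrite (reindex_inj hinj) /=; apply: eq_bigr => f _.
  by rewrite -scalemxAr coef_perm.
symmetry; apply: eq_bigr => f _; rewrite -scalemxAl /Qf Xo_P.
by congr (_ *: (_ *m _)); apply: Xo_ext => i; rewrite ffunE.
Qed.

Lemma w_rho0 g : w rho0 g = (coef g * tq g)%:C.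
Proof.
rewrite /w /rho0 mulmx_sumr raddf_sum /= (bigD1 g) //= big1 ?addr0.
  by rewrite -scalemxAr mxtraceZ Qf_mul eqxx trQ rmorphM.
by move=> f hf; rewrite -scalemxAr mxtraceZ Qf_mul eq_sym (negbTE hf) linear0 mulr0.
Qed.

Lemma construct lam :
  [/\ density rho0, perm_invariant rho0,
   (N.+1%:R * lam%:C) * p_of Psi lam rho0 = (al * HA N.+1 lam j0 + (1 - al) * HA N.+1 lam j0.+1)%:C &
   (N.+1%:R * lam%:C) * f_of Psi lam rho0 = (al * HB N.+1 lam j0 + (1 - al) * HB N.+1 lam j0.+1)%:C].
Proof.
have t0 := tsum_gt0 hD (leqW hj0).
have t1 : 0 < tsum j0.+1 by apply: tsum_gt0.
have key : forall H : nat -> R, \sum_f H (cnt f) * (coef f * tq f) =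
   al * H j0 + (1 - al) * H j0.+1.
  move=> H; under eq_bigr => f _ do rewrite mulrCA.
  rewrite sum_coef.
  rewrite (eq_bigr (fun f => H j0 * tq f)); last by move=> f /eqP ->.
  rewrite [in X in _ + X](eq_bigr (fun f => H j0.+1 * tq f)); last by move=> f /eqP ->.
  rewrite -!mulr_sumr -/(tsum j0) -/(tsum j0.+1) [H j0 * _]mulrC [H j0.+1 * _]mulrC.
  by rewrite !mulrA !divfK ?gt_eqF.
split.
- by split; [exact: rho0_adj | split; [exact: rho0_psd | exact: rho0_tr]].
- exact: rho0_inv.
- rewrite pA_formula; last exact: rho0_inv.
  rewrite -key rmorph_sum; apply: eq_bigr => f _; by rewrite w_rho0 -HA_C [RHS]rmorphM.
- rewrite pB_formula; last exact: rho0_inv.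
  rewrite -key rmorph_sum; apply: eq_bigr => f _; by rewrite w_rho0 -HB_C [RHS]rmorphM.
Qed.

End Construct.
End Main.

Section Classical.
Variable R : realType.
Variable N : nat.
Hypothesis N_gt0 : (0 < N)%N.
Variable lam : R.
Hypothesis hlam : 0 < lam < 1.

Local Notation hA := (HA N.+1 lam).
Local Notation hB := (HB N.+1 lam).

Lemma dA_eq j : hA j - hA j.+1 = lam ^+ j * (1 - lam) * (j%:R + (N%:R - j%:R) * lam).
Proof. rewrite /HA !exprS -!natr1; ring. Qed.

Lemma dB_eq j : hB j - hB j.+1 = lam ^+ j * lam * (1 + (N%:R - j%:R) * (1 - lam)).
Proof. rewrite /HB !exprS -!natr1; ring. Qed.

Lemma cross j k : (hB j - hB j.+1) * (hA k - hA k.+1) - (hB k - hB k.+1) * (hA j - hA j.+1) =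
  lam ^+ j * lam ^+ k * lam * (1 - lam) ^+ 2 * N.+1%:R * (k%:R - j%:R).
Proof. rewrite !dA_eq !dB_eq -natr1; ring. Qed.

Lemma dA_gt0 j : (j <= N)%N -> 0 < hA j - hA j.+1.
Proof.
move=> hj; case/andP: hlam => l0 l1.
rewrite dA_eq; apply: mulr_gt0; first by apply: mulr_gt0; [exact: exprn_gt0 | rewrite subr_gt0].
have hNj : 0 <= N%:R - j%:R :> R by rewrite subr_ge0 ler_nat.
have hN : 1 <= N%:R :> R by rewrite ler1n.
case: j hj hNj => [|j] hj hNj.
  rewrite add0r subr0; nra.
have : 1 <= j.+1%:R :> R by rewrite ler1n.
nra.
Qed.

Lemma dB_ge0 j : (j <= N)%N -> 0 <= hB j - hB j.+1.
Proof.
move=> hj; case/andP: hlam => l0 l1.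
rewrite dB_eq; apply: mulr_ge0; first by apply: mulr_ge0; [exact: exprn_ge0 (ltW l0) | exact: ltW].
apply: addr_ge0 => //; apply: mulr_ge0; first by rewrite subr_ge0 ler_nat.
by rewrite subr_ge0 ltW.
Qed.

Lemma hA_ge0 j : (j <= N.+1)%N -> 0 <= hA j.
Proof.
move=> hj; case/andP: hlam => l0 l1; rewrite /HA.
have h : 0 <= N.+1%:R - j%:R :> R by rewrite subr_ge0 ler_nat.
by apply: addr_ge0; apply: mulr_ge0 => //; exact: exprn_ge0 (ltW l0).
Qed.

Lemma hB_last : hB N.+1 = 0.
Proof. by rewrite /HB subrr mul0r. Qed.

Section Cert.
Variable j0 : nat.
Hypothesis hj0 : (j0 <= N)%N.
Let a := hA j0 - hA j0.+1.
Let s := (hB j0 - hB j0.+1) / a.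
Let b := hB j0 - s * hA j0.
Let line j := hB j - s * hA j - b.

Lemma a_gt0 : 0 < a. Proof. exact: dA_gt0. Qed.

Lemma line_j0 : line j0 = 0.
Proof. by rewrite /line /b subrr. Qed.

Lemma line_j1 : line j0.+1 = 0.
Proof.
rewrite /line /b /s; have := a_gt0; rewrite /a => ha.
by field; rewrite gt_eqF.
Qed.

Lemma line_step j : line j - line j.+1 =
  (lam ^+ j * lam ^+ j0 * lam * (1 - lam) ^+ 2 * N.+1%:R * (j0%:R - j%:R)) / a.
Proof.
rewrite -cross /line /s -/a; have := a_gt0 => ha.
by field; rewrite gt_eqF.
Qed.

Lemma line_step_sign j : 0 <= (line j - line j.+1) * (j0%:R - j%:R).
Proof.
case/andP: hlam => l0 l1.
rewrite line_step.
set P := lam ^+ j * lam ^+ j0 * lam * (1 - lam) ^+ 2 * N.+1%:R.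
set d := (j0%:R - j%:R).
have -> : P * d / a * d = P / a * d ^+ 2 by rewrite expr2; ring.
apply: mulr_ge0; last exact: sqr_ge0.
apply: divr_ge0; last exact: ltW a_gt0.
rewrite /P; apply: mulr_ge0; last by rewrite ler0n.
apply: mulr_ge0; last exact: sqr_ge0.
by rewrite !mulr_ge0 ?exprn_ge0 ?ltW.
Qed.

Lemma line_ge0 j : 0 <= line j.
Proof.
have down : forall m, (m <= j0)%N -> 0 <= line (j0 - m).
  elim=> [|m IH] hm; first by rewrite subn0 line_j0.
  have := line_step_sign (j0 - m.+1).
  have e : (j0 - m.+1).+1 = (j0 - m)%N by rewrite subnSK.
  rewrite e; have := IH (ltnW hm).
  have hlt : ((j0 - m.+1)%:R < j0%:R :> R) by rewrite ltr_nat -subn_gt0 subKn.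
  move=> h1 h2; rewrite -subr_gt0 in hlt; nra.
have up : forall m, 0 <= line (j0.+1 + m).
  elim=> [|m IH]; first by rewrite addn0 line_j1.
  have := line_step_sign (j0.+1 + m); rewrite addnS.
  have hlt : (j0%:R < (j0.+1 + m)%:R :> R) by rewrite ltr_nat ltnS leq_addr.
  move=> h; rewrite -subr_lt0 in hlt; nra.
case: (leqP j j0) => hj.
  by rewrite -(subKn hj); apply: down; rewrite leq_subr.
by rewrite -(subnKC hj); apply: up.
Qed.

Lemma s_ge0 : 0 <= s.
Proof. by apply: divr_ge0; [exact: dB_ge0 | exact: ltW a_gt0]. Qed.

Lemma b_le0 : b <= 0.
Proof.
have := line_ge0 N.+1; rewrite /line hB_last.
have := hA_ge0 (leqnn N.+1); have := s_ge0; nra.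
Qed.

Variable al : R.
Hypothesis hal : 0 <= al <= 1.

Lemma cert (I : finType) (r : I -> R) (c : I -> nat) :
  (forall i, 0 <= r i) -> \sum_i r i = 1 ->
  al * hA j0 + (1 - al) * hA j0.+1 <= \sum_i hA (c i) * r i ->
  (al * hB j0 + (1 - al) * hB j0.+1) * (\sum_i hA (c i) * r i) <=
  (al * hA j0 + (1 - al) * hA j0.+1) * (\sum_i hB (c i) * r i).
Proof.
move=> hr hs hX.
set X := \sum_i hA (c i) * r i.
set Y := \sum_i hB (c i) * r i.
set Dl := al * hA j0 + (1 - al) * hA j0.+1.
have hY : s * X + b <= Y.
  rewrite /X /Y mulr_sumr -[b]mul1r -hs mulr_suml -big_split /=.
  apply: ler_sum => i _; have := line_ge0 (c i); have := hr i; rewrite /line; nra.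
have hmix : al * hB j0 + (1 - al) * hB j0.+1 = s * Dl + b.
  have h0 := line_j0; have h1 := line_j1; rewrite /line in h0 h1; rewrite /Dl; nra.
have hD0 : 0 <= Dl.
  case/andP: hal => a0 a1; rewrite /Dl; apply: addr_ge0; apply: mulr_ge0;
    rewrite ?subr_ge0 // hA_ge0 //; by rewrite ?(leqW hj0) ?ltnS.
have p1 : 0 <= Dl * (Y - (s * X + b)) by apply: mulr_ge0 => //; rewrite subr_ge0.
have p2 : 0 <= (- b) * (X - Dl) by apply: mulr_ge0; rewrite ?oppr_ge0 ?subr_ge0 ?b_le0.
rewrite hmix; nra.
Qed.

End Cert.


Lemma ivt (u : nat -> R) (x : R) m : u m.+1 <= x <= u 0%N ->
  exists2 j, (j <= m)%N & u j.+1 <= x <= u j.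
Proof.
elim: m => [|m IH] /andP [h1 h2]; first by exists 0%N => //; rewrite h1 h2.
case: (lerP x (u m.+1)) => h.
  by exists m.+1 => //; rewrite h1 h.
have [j hj hj'] : exists2 j, (j <= m)%N & u j.+1 <= x <= u j by apply: IH; rewrite (ltW h) h2.
by exists j => //; rewrite (leq_trans hj).
Qed.

Lemma find_j0 (x : R) : hA N.+1 <= x <= hA 0%N ->
  exists j0 : nat, exists al : R,
    [/\ (j0 <= N)%N, 0 <= al <= 1 & x = al * hA j0 + (1 - al) * hA j0.+1].
Proof.
move=> hx; have [j hj /andP [h1 h2]] := ivt hx.
have ha := dA_gt0 hj.
exists j, ((x - hA j.+1) / (hA j - hA j.+1)); split => //.
  apply/andP; split; first by apply: divr_ge0; [rewrite subr_ge0 | exact: ltW].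
  by rewrite ler_pdivrMr // mul1r lerD2r.
by field; rewrite gt_eqF.
Qed.

Definition gk (k : nat) : R := (N%:R - k%:R) * lam / (k%:R + (N%:R - k%:R) * lam).
Definition alk (k : nat) : R := lam * (N%:R - k%:R) / (k%:R + (N%:R - k%:R) * lam).

Lemma den_gt0 k : (k <= N)%N -> 0 < k%:R + (N%:R - k%:R) * lam.
Proof.
move=> hk; case/andP: hlam => l0 l1.
have hNk : 0 <= N%:R - k%:R :> R by rewrite subr_ge0 ler_nat.
have hN : 1 <= N%:R :> R by rewrite ler1n.
case: k hk hNk => [|k] hk hNk; first by rewrite add0r subr0; nra.
have : 1 <= k.+1%:R :> R by rewrite ler1n.
nra.
Qed.

Lemma alk_in k : (k <= N)%N -> 0 <= alk k <= 1.
Proof.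
move=> hk; case/andP: hlam => l0 l1; have hd := den_gt0 hk.
have hNk : 0 <= N%:R - k%:R :> R by rewrite subr_ge0 ler_nat.
apply/andP; split; first by apply: divr_ge0; [exact: mulr_ge0 (ltW l0) hNk | exact: ltW].
rewrite ler_pdivrMr // mul1r mulrC lerDr; exact: ler0n.
Qed.

Lemma alk_mixA k : (k <= N)%N ->
  alk k * hA k + (1 - alk k) * hA k.+1 = N.+1%:R * lam ^+ k.+1.
Proof.
move=> hk; have hd := den_gt0 hk.
rewrite /alk /HA !exprS -!natr1; field; rewrite gt_eqF //.
Qed.

Lemma alk_mixB k : (k <= N)%N ->
  alk k * hB k + (1 - alk k) * hB k.+1 = (N.+1%:R * lam ^+ k.+1) * gk k.
Proof.
move=> hk; have hd := den_gt0 hk.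
rewrite /alk /gk /HB !exprS -!natr1; field; rewrite gt_eqF //.
Qed.
End Classical.

Section Final.
Variable R : realType.
Local Notation C := R[i].
Variable D : nat.
Hypothesis hD : (2 <= D)%N.
Variable n : nat.
Local Notation N := n.+1.
Variable Psi : 'cV[C]_D.
Hypothesis hPsi : adj Psi *m Psi = 1.
Variable lam : R.
Hypothesis hlam : 0 < lam < 1.

Let D_gt0 : (0 < D)%N := ltn_trans (ltnSn 0) hD.
Definition KK : R := N.+1%:R * lam.
Lemma KK_gt0 : 0 < KK.
Proof. by rewrite /KK mulr_gt0 ?ltr0n //; case/andP: hlam. Qed.

Lemma realC_neq0 (x : R) : x != 0 -> x%:C != 0 :> C.
Proof.
move=> hx; apply/eqP => h0; move/eqP: hx; apply.
by apply: complexI; rewrite h0.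
Qed.

Lemma KK_C : N.+1%:R * lam%:C = KK%:C.
Proof. by rewrite /KK rmorphM rmorph_nat. Qed.

Lemma unscale (x : C) (X : R) : KK%:C * x = X%:C -> x = (X / KK)%:C.
Proof.
move=> h; have hK := realC_neq0 (negbT (gt_eqF KK_gt0)).
apply: (mulfI hK); rewrite h -rmorphM mulrC divfK //.
exact: negbT (gt_eqF KK_gt0).
Qed.

Lemma ratio_eq (p f : C) (X Y : R) : KK%:C * p = X%:C -> KK%:C * f = Y%:C -> X != 0 ->
  p = (X / KK)%:C /\ f / p = (Y / X)%:C.
Proof.
move=> hp hf hX; have ep := unscale hp; have ef := unscale hf; split => //.
rewrite ep ef -fmorph_div; congr (_%:C).
have := KK_gt0 => hK; by field; rewrite hX gt_eqF.
Qed.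

Lemma aux_sub (a b c d : R) : 0 < c -> 0 < d -> b / d - a / c = (c * b - a * d) / (c * d).
Proof. by move=> hc hd; field; rewrite !gt_eqF. Qed.

Local Notation hA := (HA N.+1 lam).
Local Notation hB := (HB N.+1 lam).

Lemma lower_gen (j0 : nat) (al dl : R) :
  (j0 <= N)%N -> 0 <= al <= 1 -> 0 < dl ->
  KK * dl = al * hA j0 + (1 - al) * hA j0.+1 ->
  forall rho : 'M[C]_(D ^ N * D), feasible Psi dl lam rho ->
  ((al * hB j0 + (1 - al) * hB j0.+1) / (KK * dl))%:C <= f_of Psi lam rho / p_of Psi lam rho.
Proof.
move=> hj0 hal hdl hmix rho [hden [hinv hp]].
have [r [hr hs hpA hpB]] := reduce D_gt0 hPsi lam hden hinv.
rewrite KK_C in hpA hpB.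
set X := \sum_f HA N.+1 lam (cnt f) * r f in hpA.
set Y := \sum_f HB N.+1 lam (cnt f) * r f in hpB.
have hK := KK_gt0.
have ep := unscale hpA.
have hXp : KK * dl <= X.
  rewrite ep lecR ler_pdivlMr // mulrC in hp; exact: hp.
have hX0 : 0 < X by apply: lt_le_trans hXp; apply: mulr_gt0.
have [_ er] := ratio_eq hpA hpB (negbT (gt_eqF hX0)).
rewrite er lecR.
have hX' : al * hA j0 + (1 - al) * hA j0.+1 <= X by rewrite -hmix.
have hc : (al * hB j0 + (1 - al) * hB j0.+1) * X <= (al * hA j0 + (1 - al) * hA j0.+1) * Y
  := cert (N:=N) (ltn0Sn n) hlam hj0 hal hr hs (c:=@cnt n) hX'.
clearbody X Y.
rewrite -subr_ge0 aux_sub //; last exact: mulr_gt0.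
apply: divr_ge0; first by rewrite subr_ge0 hmix.
by apply: mulr_ge0; [apply: mulr_ge0; apply: ltW | apply: ltW].
Qed.



Lemma upper_gen (j0 : nat) (al dl : R) :
  (j0 <= N)%N -> 0 <= al <= 1 -> 0 < dl ->
  KK * dl = al * hA j0 + (1 - al) * hA j0.+1 ->
  exists rho : 'M[C]_(D ^ N * D),
    [/\ density rho, perm_invariant rho, p_of Psi lam rho = dl%:C &
        f_of Psi lam rho / p_of Psi lam rho = ((al * hB j0 + (1 - al) * hB j0.+1) / (KK * dl))%:C].
Proof.
move=> hj0 hal hdl hmix.
have [hden hinv hp hf] := construct D_gt0 hPsi hD hj0 hal lam.
rewrite KK_C -hmix in hp; rewrite KK_C in hf.
have hK := KK_gt0.
have [ep er] := ratio_eq hp hf (negbT (gt_eqF (mulr_gt0 hK hdl))).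
exists (rho0 n Psi j0 al); split => //.
by rewrite ep [KK * dl]mulrC mulfK // gt_eqF.
Qed.
End Final.

Section Logs.
Variable R : realType.
Variables (N : nat) (lam delta : R).
Hypothesis hlam : 0 < lam < 1.
Hypothesis hd : lam ^+ N <= delta <= 1.

Let l0 : 0 < lam. Proof. by case/andP: hlam. Qed.
Let hdel : 0 < delta. Proof. case/andP: hd => h _; exact: lt_le_trans (exprn_gt0 _ l0) h. Qed.
Let hL : ln lam < 0. Proof. exact: ln_lt0. Qed.
Let r := ln delta / ln lam.
Let eL : r * ln lam = ln delta. Proof. by rewrite /r divfK // lt_eqF. Qed.

Let r_ge0 : 0 <= r.
Proof. have := ln_le0 (proj2 (andP hd)); have := eL; have := hL; nra. Qed.

Let r_leN : r <= N%:R.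
Proof.
have h : N%:R * ln lam <= ln delta.
  rewrite mulr_natl -lnXn // ler_ln ?posrE ?exprn_gt0 //; by case/andP: hd.
have := eL; have := hL; nra.
Qed.

Let pow_le (k : nat) : r <= k%:R -> lam ^+ k <= delta.
Proof.
move=> hk; rewrite -ler_ln ?posrE ?exprn_gt0 // lnXn // -mulr_natr -eL.
have := hL; nra.
Qed.

Let le_pow (k : nat) : k%:R <= r -> delta <= lam ^+ k.
Proof.
move=> hk; rewrite -ler_ln ?posrE ?exprn_gt0 // lnXn // -mulr_natr -eL.
have := hL; nra.
Qed.

Lemma ceil_nat : exists k : nat,
  [/\ Num.ceil (ln delta / ln lam) = k%:Z, (k <= N)%N & lam ^+ k <= delta].
Proof.
have h0 : 0 <= Num.ceil r by rewrite ceil_ge0 (lt_le_trans _ r_ge0) // ltrN10.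
exists `|Num.ceil r|%N; rewrite gez0_abs //; split => //.
  by rewrite -lez_nat gez0_abs // ceil_le_int.
by apply: pow_le; rewrite -[_%:R]/((`|Num.ceil r|%N)%:~R) gez0_abs // ceil_ge.
Qed.

Lemma floor_nat : exists k : nat,
  [/\ Num.floor (ln delta / ln lam) = k%:Z, (k <= N)%N & delta <= lam ^+ k].
Proof.
have h0 : 0 <= Num.floor r by rewrite floor_ge0.
exists `|Num.floor r|%N; rewrite gez0_abs //; split => //.
  rewrite -lez_nat gez0_abs // -(ler_int R); apply: le_trans (floor_le _) _; exact: r_leN.
by apply: le_pow; rewrite -[_%:R]/((`|Num.floor r|%N)%:~R) gez0_abs // floor_le.
Qed.

End Logs.

Theorem corollary3 (R : realType) (D N : nat) (Psi : 'cV[R[i]]_D) (lam delta : R) :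
  (2 <= D)%N -> (1 <= N)%N ->
  adj Psi *m Psi = 1 ->
  0 < lam < 1 -> lam ^+ N <= delta <= 1 ->
  let kp := Num.ceil (ln delta / ln lam) in
  let km := Num.floor (ln delta / ln lam) in
  exists F : R[i], is_F N Psi delta lam F /\
    ((((N%:R - kp%:~R) * lam) / (kp%:~R + (N%:R - kp%:~R) * lam))%:C <= F) /\
    (F <= (((N%:R - km%:~R) * lam) / (km%:~R + (N%:R - km%:~R) * lam))%:C).
Proof.
case: N => [//|n] hD _ hPsi hlam hd kp km.
have [k1 [ek1 hk1 hk1']] := ceil_nat hlam hd.
have [k2 [ek2 hk2 hk2']] := floor_nat hlam hd.
rewrite /kp /km ek1 ek2 -!pmulrn.
have l0 : 0 < lam by case/andP: hlam.
have hdel : 0 < delta by case/andP: hd => h _; exact: lt_le_trans (exprn_gt0 _ l0) h.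
have hK := KK_gt0 n hlam.
have hrange : HA n.+2 lam n.+2 <= KK n lam * delta <= HA n.+2 lam 0.
  case/andP: hd => h1 h2; rewrite /HA /KK subrr mul0r add0r subr0 mul0r addr0 expr1.
  apply/andP; split; last by rewrite -[X in _ <= X]mulr1 ler_wpM2l // ltW.
  by rewrite exprS mulrA ler_wpM2l // ltW.
have [j0 [al [hj0 hal hmix]]] := find_j0 (ltn0Sn n) hlam hrange.
have [rho [hden hinv hp hratio]] := upper_gen hD hPsi hlam hj0 hal hdel hmix.
set V := (al * HB n.+2 lam j0 + (1 - al) * HB n.+2 lam j0.+1) / (KK n lam * delta).
have hlow := lower_gen hD hPsi hlam hj0 hal hdel hmix.
have mixk : forall k, (k <= n.+1)%N -> KK n lam * lam ^+ k =
    alk n.+1 lam k * HA n.+2 lam k + (1 - alk n.+1 lam k) * HA n.+2 lam k.+1.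
  by move=> k hk; rewrite (alk_mixA (ltn0Sn n) hlam hk) /KK -mulrA -exprS.
have ratk : forall k, (k <= n.+1)%N ->
    (alk n.+1 lam k * HB n.+2 lam k + (1 - alk n.+1 lam k) * HB n.+2 lam k.+1) / (KK n lam * lam ^+ k)
    = gk n.+1 lam k.
  move=> k hk; rewrite (alk_mixB (ltn0Sn n) hlam hk).
  have -> : KK n lam * lam ^+ k = n.+2%:R * lam ^+ k.+1 by rewrite /KK -mulrA -exprS.
  by rewrite [_ * gk _ _ _]mulrC mulfK // gt_eqF // mulr_gt0 ?exprn_gt0 ?ltr0n.
exists V%:C; split; [split|split].
- exists rho; split => //; split => //; split => //; by rewrite hp lecR.
- move=> rho' hf; exact: hlow.
- have := lower_gen hD hPsi hlam hk1 (alk_in (ltn0Sn n) hlam hk1) (exprn_gt0 _ l0) (mixk _ hk1).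
  move=> /(_ rho); rewrite ratk // hratio; apply.
  split => //; split => //; by rewrite hp lecR.
- have [rho2 [hden2 hinv2 hp2 hratio2]] :=
    upper_gen hD hPsi hlam hk2 (alk_in (ltn0Sn n) hlam hk2) (exprn_gt0 _ l0) (mixk _ hk2).
  rewrite ratk // in hratio2; rewrite -hratio2 -/V; apply: hlow.
  split => //; split => //; by rewrite hp2 lecR.
Qed.
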